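(* Let $M\in S_d^+$, let $z,v\in\mathbb R^d\setminus\{0\}$ and $\theta_0\in[0,\pi/2]$ be such that $\langle v,z-v\rangle_M\ge\cos(\theta_0)\|v\|_M\|z-v\|_M$. Then $$\|z-v\|_M\le\|z\|_M-\frac{\langle z,v\rangle_M}{\|z\|_M}+\frac{(\sin\theta_0)^2\|v\|_M^2}{\|z\|_M}.$$
   Context: $S_d^+$ is the set of $d\times d$ symmetric positive definite matrices; $\langle u,v\rangle_M:=u^TMv$, $\|u\|_M:=\sqrt{\langle u,u\rangle_M}$. *)

(* Defs.v *)
From HB Require Import structures.
From mathcomp Require Import all_boot all_order all_algebra.
From mathcomp Require Import all_classical all_reals all_analysis.
Set Implicit Arguments. Unset Strict Implicit. Unset Printing Implicit Defensive.
Import Order.TTheory GRing.Theory Num.Theory.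
Local Open Scope ring_scope.

Definition ipM (R : realType) (d : nat) (M : 'M[R]_d) (u v : 'cV[R]_d) : R :=
  (u^T *m M *m v) ord0 ord0.

Definition normM (R : realType) (d : nat) (M : 'M[R]_d) (u : 'cV[R]_d) : R :=
  Num.sqrt (ipM M u u).

Definition spd (R : realType) (d : nat) (M : 'M[R]_d) : Prop :=
  M^T = M /\ forall x : 'cV[R]_d, x != 0 -> 0 < ipM M x x.

(* Main.v *)
Require Import Defs.
From HB Require Import structures.
From mathcomp Require Import all_boot all_order all_algebra.
From mathcomp Require Import all_classical all_reals all_analysis.
From mathcomp Require Import ring lra.
Import Order.TTheory GRing.Theory Num.Theory.
Local Open Scope ring_scope.

Lemma ipMDl (R : realType) (d : nat) (M : 'M[R]_d) u w x :
  ipM M (u + w) x = ipM M u x + ipM M w x.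
Proof. by rewrite /ipM linearD /= !mulmxDl mxE. Qed.

Lemma ipMDr (R : realType) (d : nat) (M : 'M[R]_d) u w x :
  ipM M x (u + w) = ipM M x u + ipM M x w.
Proof. by rewrite /ipM mulmxDr mxE. Qed.

Lemma ipMC (R : realType) (d : nat) (M : 'M[R]_d) u w :
  M^T = M -> ipM M u w = ipM M w u.
Proof.
move=> HM; rewrite /ipM.
transitivity ((w^T *m M *m u)^T ord0 ord0); last by rewrite mxE.
by rewrite !trmx_mul HM trmxK mulmxA.
Qed.

Lemma ipM_ge0 (R : realType) (d : nat) (M : 'M[R]_d) x :
  spd M -> 0 <= ipM M x x.
Proof.
move=> [_ H]; have [->|nz] := eqVneq x 0; last exact: ltW (H x nz).
by rewrite /ipM mulmx0 mxE.
Qed.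

Theorem lemma1p7 (R : realType) (d : nat) (M : 'M[R]_d) (z v : 'cV[R]_d)
  (theta0 : R) :
  spd M -> z != 0 -> v != 0 ->
  0 <= theta0 <= pi / 2 ->
  ipM M v (z - v) >= cos theta0 * normM M v * normM M (z - v) ->
  normM M (z - v) <=
    normM M z - ipM M z v / normM M z
    + (sin theta0) ^+ 2 * (normM M v) ^+ 2 / normM M z.
Proof.
move=> HM nz nv /andP[t0 t1] Hp.
have HS := HM.1.
set w := z - v in Hp *.
have zE : z = v + w by rewrite /w addrC subrK.
clearbody w.
have Ezz : ipM M z z = ipM M v v + 2 * ipM M v w + ipM M w w.
  rewrite zE !ipMDl !ipMDr (@ipMC _ _ M w v HS); ring.
have Ezv : ipM M z v = ipM M v w + ipM M v v.
  rewrite zE ipMDl (@ipMC _ _ M w v HS); ring.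
rewrite Ezv /normM.
have cz : 0 < ipM M z z by exact: HM.2 z nz.
have A0 := @ipM_ge0 _ _ M v HM.
have B0 := @ipM_ge0 _ _ M w HM.
move: Hp; rewrite /normM.
set P := ipM M v w.
have ha := sqr_sqrtr A0; have hb := sqr_sqrtr B0; have hc := sqr_sqrtr (ltW cz).
have a0 : 0 <= Num.sqrt (ipM M v v) by exact: sqrtr_ge0.
have b0 : 0 <= Num.sqrt (ipM M w w) by exact: sqrtr_ge0.
have c0 : 0 < Num.sqrt (ipM M z z) by rewrite sqrtr_gt0.
set a := Num.sqrt (ipM M v v) in ha a0 *.
set b := Num.sqrt (ipM M w w) in hb b0 *.
set c := Num.sqrt (ipM M z z) in hc c0 *.
have k0 : 0 <= cos theta0 by apply: cos_ge0_pihalf; rewrite t1 andbT; lra.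
have sc := cos2Dsin2 theta0.
set k := cos theta0 in k0 sc *. set s := sin theta0 in sc *.
move=> Hp.
have P0 : 0 <= P.
  apply: le_trans Hp; apply: mulr_ge0 => //; exact: mulr_ge0.
have key : b * c <= b ^+ 2 + P + s ^+ 2 * a ^+ 2.
  have R0 : 0 <= b ^+ 2 + P + s ^+ 2 * a ^+ 2.
    apply: addr_ge0; [apply: addr_ge0 => //; exact: sqr_ge0|].
    apply: mulr_ge0; exact: sqr_ge0.
  have sq : forall x y : R, 0 <= x -> 0 <= y -> x ^+ 2 <= y ^+ 2 -> x <= y.
    by move=> x y x0 y0 h; nra.
  apply: sq => //; first exact: mulr_ge0 b0 (ltW c0).
  rewrite exprMn hc Ezz -ha -hb.
  have h1 : k ^+ 2 * (a ^+ 2 * b ^+ 2) <= P ^+ 2.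
    have kab0 : 0 <= k * a * b by apply: mulr_ge0 => //; exact: mulr_ge0.
    have : (k * a * b) ^+ 2 <= P ^+ 2 by nra.
    by rewrite !exprMn -mulrA.
  have h2 : 0 <= s ^+ 2 * a ^+ 2 by apply: mulr_ge0; exact: sqr_ge0.
  rewrite -/P.
  have h3 : P ^+ 2 <= (P + s ^+ 2 * a ^+ 2) ^+ 2 by nra.
  have h4 : 0 <= s ^+ 2 * (a ^+ 2 * b ^+ 2).
    by apply: mulr_ge0; [exact: sqr_ge0| apply: mulr_ge0; exact: sqr_ge0].
  have h5 : a ^+ 2 * b ^+ 2 = k ^+ 2 * (a ^+ 2 * b ^+ 2) + s ^+ 2 * (a ^+ 2 * b ^+ 2).
    by rewrite -mulrDl sc mul1r.
  set X := a ^+ 2 * b ^+ 2 in h1 h4 h5.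
  have -> : b ^+ 2 * (a ^+ 2 + 2 * P + b ^+ 2) = X + 2 * P * b ^+ 2 + b ^+ 2 * b ^+ 2.
    rewrite /X; ring.
  have -> : (b ^+ 2 + P + s ^+ 2 * a ^+ 2) ^+ 2 = b ^+ 2 * b ^+ 2 + 2 * P * b ^+ 2 + 2 * (s ^+ 2 * X) + (P + s ^+ 2 * a ^+ 2) ^+ 2.
    rewrite /X; ring.
  lra.
rewrite -ha.
have -> : c - (P + a ^+ 2) / c + s ^+ 2 * a ^+ 2 / c
  = (c ^+ 2 - P - a ^+ 2 + s ^+ 2 * a ^+ 2) / c.
  by field; rewrite gt_eqF.
rewrite ler_pdivlMr // hc Ezz -ha -hb -/P.
lra.
Qed.
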